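(* Let $Q$ be a simply-laced cluster quiver which does not contain any non-oriented full cycle. Let $S$ and $S'$ be two different sets of arrows of $Q$ such that for every full cycle $C$ of $Q$, the number of arrows of $C$ contained in $S$ and the number of arrows of $C$ contained in $S'$ have the same parity. Then the signed graph $\Sigma(q_{S'})$ can be obtained from $\Sigma(q_S)$ by a sequence of sign changes $r_{i_1},\dots,r_{i_m}$ at vertices such that each vertex is used at most once and not all vertices are used.
   Context: A cluster quiver is a finite quiver without loops and oriented 2-cycles; simply-laced means there is at most one arrow between any two vertices. A cycle is a cycle of length $\ge3$ without repeated vertices in the underlying graph; it is full if the full subquiver on its vertices contains no other arrows, and oriented if its arrows go consistently around it. A signed graph is a graph whose edges are either solid or dotted. For a set $S$ of arrows of $Q$, $\Sigma(q_S)$ is the underlying undirected graph of $Q$ in which edges coming from arrows in $S$ are dotted and all other edges are solid (it is the signed graph of the quadratic form $q_S(x)=\sum_ix_i^2+\sum_{i<j}a_{ij}x_ix_j$ with $a_{ij}=1$ for a dotted edge, $-1$ for a solid edge, $0$ otherwise). For a vertex $i$ of a signed graph $\Sigma$, the sign change $r_i(\Sigma)$ is the signed graph obtained by switching solid/dotted on every edge incident to $i$. *)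

(* Defs.v *)
From mathcomp Require Import all_boot.
Set Implicit Arguments. Unset Strict Implicit. Unset Printing Implicit Defensive.

(* A simply-laced quiver on a finite vertex type V is a relation [arr]:
   [arr x y] iff there is an arrow x -> y (at most one arrow per pair).
   Cluster quiver: no loops and no oriented 2-cycles. *)
Definition cluster_quiver (V : finType) (arr : rel V) : Prop :=
  (forall x, ~~ arr x x) /\ (forall x y, ~~ (arr x y && arr y x)).

Definition adj (V : finType) (arr : rel V) : rel V :=
  fun x y => arr x y || arr y x.

Definition arrow_set (V : finType) (arr : rel V) (S : {set V * V}) : Prop :=
  forall p, p \in S -> arr p.1 p.2.

Definition is_cycle (V : finType) (arr : rel V) (c : seq V) : Prop :=
  uniq c /\ 3 <= size c /\ cycle (adj arr) c.

Definition full_cycle (V : finType) (arr : rel V) (c : seq V) : Prop :=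
  forall x y, x \in c -> y \in c -> adj arr x y ->
    (y == next c x) || (x == next c y).

Definition oriented_cycle (V : finType) (arr : rel V) (c : seq V) : Prop :=
  (forall x, x \in c -> arr x (next c x)) \/
  (forall x, x \in c -> arr (next c x) x).

Definition cycle_count (V : finType) (S : {set V * V}) (c : seq V) : nat :=
  count (fun x => ((x, next c x) \in S) || ((next c x, x) \in S)) c.

(* signed graphs on V: None = no edge, Some true = dotted, Some false = solid *)
Definition signed_graph (V : finType) := {ffun V * V -> option bool}.

Definition sigma_q (V : finType) (arr : rel V) (S : {set V * V})
  : signed_graph V :=
  [ffun p => if adj arr p.1 p.2
             then Some (((p.1, p.2) \in S) || ((p.2, p.1) \in S))
             else None].

Definition sign_change (V : finType) (i : V) (G : signed_graph V)
  : signed_graph V :=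
  [ffun p => if (p.1 == i) || (p.2 == i) then omap negb (G p) else G p].

Definition sign_changes (V : finType) (s : seq V) (G : signed_graph V)
  : signed_graph V :=
  foldl (fun H i => sign_change i H) G s.

(* Main.v *)
Require Import Defs.
From mathcomp Require Import all_boot.
From mathcomp Require Import zify.
Set Implicit Arguments. Unset Strict Implicit. Unset Printing Implicit Defensive.

Fixpoint wp (V : finType) (d : V -> V -> bool) (x : V) (p : seq V) : bool :=
  match p with [::] => false | y :: p' => d x y (+) wp d y p' end.

Definition cpar (V : finType) (d : V -> V -> bool) (c : seq V) : bool :=
  if c is x :: q then wp d x (rcons q x) else false.

Lemma wp_cat (V : finType) (d : V -> V -> bool) x p1 p2 :
  wp d x (p1 ++ p2) = wp d x p1 (+) wp d (last x p1) p2.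
Proof. by elim: p1 x => [|y p IH] x //=; rewrite IH addbA. Qed.

Lemma wp_rcons (V : finType) (d : V -> V -> bool) x p y :
  wp d x (rcons p y) = wp d x p (+) d (last x p) y.
Proof. by rewrite -cats1 wp_cat /= addbF. Qed.

Lemma cpar_rot1 (V : finType) (d : V -> V -> bool) z s :
  cpar d (z :: s) = cpar d (rcons s z).
Proof.
case: s => [|y s] //=.
by rewrite /= !wp_rcons !last_rcons addbC.
Qed.

Lemma cpar_catC (V : finType) (d : V -> V -> bool) a b :
  cpar d (a ++ b) = cpar d (b ++ a).
Proof.
elim: a b => [|z a IH] b; first by rewrite cats0.
by rewrite cat_cons cpar_rot1 rcons_cat IH cat_rcons.
Qed.

Lemma cpar_rot (V : finType) (d : V -> V -> bool) i c :
  cpar d (rot i c) = cpar d c.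
Proof. by rewrite /rot cpar_catC cat_take_drop. Qed.

Lemma last_rev_belast (V : finType) (y : V) p :
  last (last y p) (rev (belast y p)) = y.
Proof.
by rewrite -(last_cons y) -rev_rcons -lastI rev_cons last_rcons.
Qed.

Lemma wp_rev (V : finType) (d : V -> V -> bool) (dsym : forall a b, d a b = d b a) x p :
  wp d (last x p) (rev (belast x p)) = wp d x p.
Proof.
elim: p x => [|y p IH] x //=.
by rewrite rev_cons wp_rcons IH last_rev_belast dsym addbC.
Qed.

Lemma notuniq_split (V : finType) (c : seq V) :
  ~~ uniq c -> exists P w M N, c = P ++ w :: M ++ w :: N.
Proof.
elim: c => [|x q IH] //=; rewrite negb_and negbK => /orP [xq | nu].
  by case: (splitPr xq) => M N; exists [::], x, M, N.
by case: (IH nu) => P [w [M [N ->]]]; exists (x :: P), w, M, N.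
Qed.

Lemma closed_even (V : finType) (arr : rel V) (d : V -> V -> bool)
  (noloop : forall x, ~~ arr x x) (dsym : forall a b, d a b = d b a)
  (H : forall c, uniq c -> 3 <= size c -> cycle (adj arr) c -> full_cycle arr c ->
        cpar d c = false) n :
  forall c, size c <= n -> cycle (adj arr) c -> cpar d c = false.
Proof.
have adj0 : forall x, adj arr x x = false by move=> x; rewrite /adj orbb (negbTE (noloop x)).
elim: n => [|n IH] c; first by case: c.
move=> Hs Hc.
case Hu: (uniq c).
- case: c Hs Hc Hu => [|x [|y [|z q]]] //.
  + by rewrite /= adj0.
  + by move=> _ _ _; rewrite /= dsym addbF addbb.
  set c := [:: x, y, z & q] => Hs Hc Hu.
  have [full|nfull] := boolP [forall u, forall v,
     ((u \in c) && (v \in c) && adj arr u v) ==> ((v == next c u) || (u == next c v))].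
    apply: H => //.
    move=> u v hu hv ha; move/forallP: full => /(_ u)/forallP/(_ v).
    by rewrite hu hv ha.
  move: nfull; rewrite negb_forall => /existsP [u]; rewrite negb_forall => /existsP [v].
  rewrite negb_imply negb_or => /andP [/andP[/andP[hu hv] ha] /andP[n1 n2]].
  case: (rot_to hu) => i s' Hr.
  rewrite -(cpar_rot d i) Hr.
  have Hc' : cycle (adj arr) (u :: s') by rewrite -Hr rot_cycle.
  have Hu' : uniq (u :: s') by rewrite -Hr rot_uniq.
  have Hs' : size (u :: s') <= n.+1 by rewrite -Hr size_rot.
  have Hn : next (u :: s') =1 next c by rewrite -Hr; apply: next_rot.
  have vs : v \in s'.
    have : v \in u :: s' by rewrite -Hr mem_rot.
    rewrite inE => /orP [/eqP E|//]; by rewrite E adj0 in ha.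
  case: (splitPr vs) Hc' Hu' Hs' Hn => A B Hc' Hu' Hs' Hn.
  have An : A != [::].
    apply/negP => /eqP E; subst A.
    by move: n1; rewrite -Hn /= eqxx eqxx.
  have Bn : B != [::].
    apply/negP => /eqP E; subst B.
    have Hn2 : next (v :: u :: A) =1 next c.
      move=> w; rewrite -Hn.
      have -> : v :: u :: A = rot (size (u :: A)) ((u :: A) ++ [:: v]).
        by rewrite rot_size_cat.
      by apply: next_rot.
    by move: n2; rewrite -Hn2 /= eqxx eqxx.
  have adjs : forall a b, adj arr a b = adj arr b a by move=> a b; rewrite /adj orbC.
  have e1 : cycle (adj arr) (u :: rcons A v).
    move: Hc'; rewrite /= rcons_cat cat_path /= rcons_path => /and4P [p1 p2 _ _].
    by rewrite !rcons_path p1 p2 last_rcons adjs.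
  have e2 : cycle (adj arr) (v :: rcons B u).
    move: Hc'; rewrite /= rcons_cat cat_path /= rcons_path => /and4P [_ _ p1 p2].
    by rewrite /= !rcons_path p1 p2 last_rcons /=.
  have s1 : size (u :: rcons A v) <= n.
    move: Hs'; rewrite /= size_cat /= size_rcons.
    by case: B Bn {e2 Hc' Hu' Hn vs} => [|b B] //= _; lia.
  have s2 : size (v :: rcons B u) <= n.
    move: Hs'; rewrite /= size_cat /= size_rcons.
    by case: A An {e1 s1 Hc' Hu' Hn} => [|a A] //= _; lia.
  have c1 := IH _ s1 e1; have c2 := IH _ s2 e2.
  move: c1 c2; rewrite /= rcons_cat wp_cat /= !wp_rcons !last_rcons.
  rewrite (dsym v u).
  by case: (wp d u A); case: (d (last u A) v); case: (d u v); case: (wp d v B);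
     case: (d (last v B) u).
- move/negbT: Hu => /notuniq_split [P [w [M [N E]]]].
  rewrite E in Hs Hc *.
  rewrite -(cpar_rot d (size P)) rot_size_cat.
  rewrite -(rot_cycle (size P)) rot_size_cat in Hc.
  move: Hc Hs; rewrite cat_cons -catA cat_cons !size_cat /= size_cat => Hc Hs.
  have e1 : cycle (adj arr) (w :: M).
    move: Hc; rewrite /= rcons_cat cat_path /= => /and3P [p1 p2 _].
    by rewrite rcons_path p1 p2.
  have e2 : cycle (adj arr) (w :: N ++ P).
    by move: Hc; rewrite /= rcons_cat cat_path /= => /and3P [_ _ ->].
  have s1 : size (w :: M) <= n by move: Hs; rewrite /=; lia.
  have s2 : size (w :: N ++ P) <= n by move: Hs; rewrite /= size_cat; lia.
  have c1 := IH _ s1 e1; have c2 := IH _ s2 e2.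
  rewrite /= wp_rcons in c1; rewrite /= in c2.
  by rewrite /= rcons_cat wp_cat /= c2 addbF.
Qed.

Definition inS (V : finType) (T : {set V * V}) (a b : V) : bool :=
  ((a, b) \in T) || ((b, a) \in T).

Lemma wp_belast (V : finType) (d : V -> V -> bool) x p :
  wp d x p = odd (count (fun pr => d pr.1 pr.2) (zip (belast x p) p)).
Proof. by elim: p x => [|y p IH] x //=; rewrite IH oddD oddb. Qed.

Lemma count_next (V : finType) (f : V -> V) (g : V -> V -> bool) x s :
  path (frel f) x s ->
  count (fun z => g z (f z)) (belast x s) = count (fun pr => g pr.1 pr.2) (zip (belast x s) s).
Proof.
elim: s x => [|y s IH] x //= /andP [/eqP fx ps].
by rewrite IH // fx.
Qed.

Lemma odd_count_xor (T : Type) (a b : pred T) s :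
  odd (count a s) (+) odd (count b s) = odd (count (fun z => a z (+) b z) s).
Proof.
elim: s => [|z s IH] //=; rewrite !oddD !oddb -IH.
by case: (a z); case: (b z); case: (odd (count a s)); case: (odd (count b s)).
Qed.

Lemma link (V : finType) (S S' : {set V * V}) c :
  uniq c ->
  cpar (fun a b => inS S a b (+) inS S' a b) c =
  odd (cycle_count S c) (+) odd (cycle_count S' c).
Proof.
case: c => [|x q] // Hu.
have hn : path (frel (next (x :: q))) x (rcons q x) by have := cycle_next Hu.
rewrite /cycle_count.
have E : forall T : {set V * V}, count (fun z => ((z, next (x :: q) z) \in T) ||
            ((next (x :: q) z, z) \in T)) (x :: q) =
         count (fun pr => inS T pr.1 pr.2) (zip (x :: q) (rcons q x)).
  move=> T; have := @count_next V (next (x :: q)) (inS T) x (rcons q x) hn.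
  by rewrite belast_rcons.
rewrite !E /cpar odd_count_xor wp_belast belast_rcons.
done.
Qed.

Lemma sc_apply (V : finType) s (G : signed_graph V) p :
  sign_changes s G p =
  if odd (count (fun i => (p.1 == i) || (p.2 == i)) s) then omap negb (G p) else G p.
Proof.
elim: s G => [|i s IH] G //=.
rewrite /sign_changes /= -/(sign_changes s _) IH ffunE oddD oddb.
case: ((p.1 == i) || (p.2 == i)); case: (odd _) => //=.
by case: (G p) => [[]|].
Qed.

Lemma odd_count2 (V : finType) (a b : V) s :
  uniq s -> a != b ->
  odd (count (fun i => (a == i) || (b == i)) s) = (a \in s) (+) (b \in s).
Proof.
move=> + ab; elim: s => [|i s IH] //= /andP [ni us].
rewrite oddD oddb IH // !inE.
have [ai|ai] := eqVneq a i; have [bi|bi] := eqVneq b i => //=.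
- by subst; rewrite eqxx in ab.
- by subst i; rewrite (negbTE ni) /=; case: (b \in s).
- by subst i; rewrite (negbTE ni) /=; case: (a \in s).
Qed.

Theorem lemma6p2 (V : finType) (arr : rel V) (S S' : {set V * V}) :
  cluster_quiver arr ->
  (forall c, is_cycle arr c -> full_cycle arr c -> oriented_cycle arr c) ->
  arrow_set arr S -> arrow_set arr S' -> S != S' ->
  (forall c, is_cycle arr c -> full_cycle arr c ->
     odd (cycle_count S c) = odd (cycle_count S' c)) ->
  exists s : seq V,
    [/\ uniq s, size s < #|V| & sign_changes s (sigma_q arr S) = sigma_q arr S'].
Proof.
move=> [noloop no2] Hor HS HS' neq Hpar.
pose d := fun a b => inS S a b (+) inS S' a b.
have dsym : forall a b, d a b = d b a.
  by move=> a b; rewrite /d /inS orbC [((b, a) \in S') || _]orbC.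
have adjs : symmetric (adj arr) by move=> a b; rewrite /adj orbC.
have Hfull : forall c, uniq c -> 3 <= size c -> cycle (adj arr) c -> full_cycle arr c ->
    cpar d c = false.
  move=> c u s cy f; rewrite /d link // (Hpar c) ?addbb //; by split.
have closed : forall x p, path (adj arr) x p -> last x p = x -> wp d x p = false.
  move=> x p; case/lastP: p => [|q y] // pp; rewrite last_rcons => yx; subst y.
  exact: (closed_even noloop dsym Hfull (leqnn (size (x :: q))) pp).
have same_end : forall r p1 p2, path (adj arr) r p1 -> path (adj arr) r p2 ->
    last r p1 = last r p2 -> wp d r p1 = wp d r p2.
  move=> r p1 p2 h1 h2 he.
  have h3 : path (adj arr) (last r p2) (rev (belast r p2)).
    by rewrite rev_path (@eq_path _ _ (adj arr)) // => a b; apply: adjs.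
  have := closed r (p1 ++ rev (belast r p2)).
  rewrite cat_path h1 he h3 last_cat he last_rev_belast wp_cat he (wp_rev dsym).
  move=> /(_ isT erefl).
  by case: (wp d r p1); case: (wp d r p2).
have csym : connect_sym (adj arr) := sym_connect_sym adjs.
have ex : forall v, exists p, path (adj arr) (root (adj arr) v) p &&
    (last (root (adj arr) v) p == v).
  move=> v; have : connect (adj arr) (root (adj arr) v) v by rewrite csym connect_root.
  by case/connectP => p pp lp; exists p; rewrite pp -lp eqxx.
pose pv v := xchoose (ex v).
have pvP : forall v, path (adj arr) (root (adj arr) v) (pv v) &&
    (last (root (adj arr) v) (pv v) == v) := fun v => xchooseP (ex v).
pose X := [set v | wp d (root (adj arr) v) (pv v)].
have key : forall x y, adj arr x y -> (x \in X) (+) (y \in X) = d x y.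
  move=> x y hxy; rewrite !inE.
  have rxy : root (adj arr) x = root (adj arr) y by apply/(rootP csym); apply: connect1.
  case/andP: (pvP x) => px /eqP lx; case/andP: (pvP y) => py /eqP ly.
  rewrite rxy in px lx *.
  have h1 : path (adj arr) (root (adj arr) y) (rcons (pv x) y) by rewrite rcons_path px lx hxy.
  have h2 : last (root (adj arr) y) (rcons (pv x) y) = last (root (adj arr) y) (pv y).
    by rewrite last_rcons ly.
  have := same_end _ _ _ h1 py h2; rewrite wp_rcons lx => <-.
  by rewrite addbA addbb.
have [v0 _] : exists v0 : V, true.
  case: (pickP (fun _ : V => true)) => [v0 _|none]; first by exists v0.
  by exfalso; move/eqP: neq; apply; apply/setP => p; have := none p.1.
pose Y := if v0 \in X then ~: X else X.
have keyY : forall x y, adj arr x y -> (x \in Y) (+) (y \in Y) = d x y.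
  move=> x y h; rewrite /Y; case: (v0 \in X); last exact: key.
  by rewrite !inE addNb addbN negbK -key // !inE.
have v0Y : v0 \notin Y by rewrite /Y; case h: (v0 \in X); rewrite ?in_setC h.
exists (enum Y); split; first exact: enum_uniq.
  rewrite -cardE; have := cardsC Y.
  have : 0 < #|~: Y| by apply/card_gt0P; exists v0; rewrite inE.
  lia.
apply/ffunP => p; rewrite sc_apply /sigma_q !ffunE.
case: p => a b /=; case h: (adj arr a b); last by case: (odd _).
have ab : a != b.
  by apply: contraTneq h => ->; rewrite /adj orbb (negbTE (noloop b)).
rewrite odd_count2 ?enum_uniq // !mem_enum keyY // /d /inS.
by case: (((a, b) \in S) || _); case: (((a, b) \in S') || _).
Qed.
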